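(* Let $\ell\ge2$ be an integer and let $F$ be one of: $2P_\ell$ with $\ell$ even; $P_{\ell+1}\cup P_\ell$; $P_{\ell+2}\cup P_\ell$ with $\ell$ odd; $2P_\ell\cup P_2$ with $\ell$ odd (so that $\delta_F=\ell-1$). Then for every integer $t\ge1$ and every integer $1\le s\le \delta_F+1$, $$\mathcal{N}_s\big(G_F(t(\ell-1)+1)\big)\ \ge\ \mathcal{N}_s\big(K_1+tK_{\ell-1}\big).$$
   Context: $P_m$, $K_m$, $E_m$: path, complete graph, edgeless graph on $m$ vertices; $G\cup H$ disjoint union, $tG$ is $t$ disjoint copies, $G+H$ the join. For a linear forest $F=P_{\ell_1}\cup\cdots\cup P_{\ell_k}$, $\delta_F=\sum_i\lfloor\ell_i/2\rfloor-1$, $G_F(n)=K_{\delta_F}+E_{n-\delta_F}$ if some $\ell_i$ is even and $G_F(n)=K_{\delta_F}+(E_{n-\delta_F-2}\cup K_2)$ if all $\ell_i$ are odd. $\mathcal{N}_s(G)$ is the number of copies of $K_s$ in $G$. *)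

(* Defs.v *)
From mathcomp Require Import all_boot.
Set Implicit Arguments. Unset Strict Implicit. Unset Printing Implicit Defensive.

(* Graphs on vertex set 'I_n are given by a relation e : rel 'I_n;
   only e x y for x != y matters (we always use symmetric, irreflexive e). *)

Definition is_clique n (e : rel 'I_n) (A : {set 'I_n}) : bool :=
  [forall x in A, forall y in A, (x != y) ==> e x y].

Definition Ns n (s : nat) (e : rel 'I_n) : nat :=
  #|[set A : {set 'I_n} | (#|A| == s) && is_clique e A]|.

(* A linear forest F = P_{l_1} u ... u P_{l_k} is represented by the list
   of its path orders [:: l_1; ...; l_k]. *)
Definition deltaF (F : seq nat) : nat := (sumn (map (fun l => l./2) F)).-1.

(* G_F(n) on vertex set 'I_n: vertices 0..deltaF-1 form the clique K_delta
   joined to everything; if all l_i are odd, additionally the two last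
   vertices n-2, n-1 (when both lie outside the K_delta part) form a K_2. *)
Definition GF (F : seq nat) (n : nat) : rel 'I_n :=
  fun i j =>
    (i != j) &&
    [|| (i < deltaF F), (j < deltaF F) |
        [&& all odd F, deltaF F <= n - 2, n - 2 <= i & n - 2 <= j]].

(* K_1 + t K_{l-1} on vertex set 'I_(t*(l-1)+1): vertex 0 is the apex,
   vertices 1 + k(l-1) .. (k+1)(l-1), k < t, form the k-th copy of K_{l-1}. *)
Definition K1tK (l t : nat) : rel 'I_(t * (l - 1) + 1) :=
  fun i j =>
    (i != j) &&
    [|| val i == 0, val j == 0 | ((val i).-1 %/ (l - 1) == (val j).-1 %/ (l - 1))].
Arguments K1tK l t i j : clear implicits.
Arguments GF F n i j : clear implicits.

(* Main.v *)
Require Import Defs.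
From mathcomp Require Import all_boot.
From mathcomp Require Import zify.
Set Implicit Arguments. Unset Strict Implicit. Unset Printing Implicit Defensive.
Definition Pm d m (x:nat) := [|| x == m, x == 0 | ((x.-1 %/ d == m.-1 %/ d) && (x < m))].
Definition hv d m x := if x == m then x else x - m.-1 %/ d * d.
Lemma dfacts d a : 0 < d -> a = a %/ d * d + a %% d /\ a %% d < d.
Proof. by move=> d0; split; [apply: divn_eq | apply: ltn_pmod]. Qed.
Lemma F2 d m x : 0 < d -> Pm d m x -> x != m -> (hv d m x < m) && (hv d m x < d).
Proof. rewrite /Pm /hv => d0 H ne; rewrite (negbTE ne) in H *.
  have := dfacts (m.-1) d0; have := dfacts (x.-1) d0.
  move: H; move: (x.-1 %/ d) => qx.
  move: (m.-1 %/ d) (m.-1 %% d) (x.-1 %% d) => q r1 r2.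
  move=> /or3P[//|/eqP|/andP[/eqP e' lt]]; try subst qx; move: (q*d) => Q; lia.
Qed.
Lemma F3 d m x y : 0 < d -> Pm d m x -> Pm d m y -> hv d m x = hv d m y -> x = y.
Proof. rewrite /Pm /hv => d0 H H'.
  have := dfacts (m.-1) d0; have := dfacts (x.-1) d0; have := dfacts (y.-1) d0.
  move: H H'; move: (x.-1 %/ d) (y.-1 %/ d)=> qx qy.
  move: (m.-1 %/ d) (m.-1 %% d) (x.-1 %% d) (y.-1 %% d) => q r1 r2 r3.
  move=> /or3P[/eqP h1|/eqP h1|/andP[/eqP e' lt]] /or3P[/eqP h2|/eqP h2|/andP[/eqP e'' lt']]; try subst qx; try subst qy;
  move: (q*d) => Q; repeat case: ifP; lia.
Qed.

Definition hm n d m (x : 'I_n) : 'I_n :=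
  if val x == m then x else Ordinal (leq_ltn_trans (leq_subr (m.-1 %/ d * d) x) (ltn_ord x)).
Lemma hmE n d m (x : 'I_n) : val (hm d m x) = hv d m (val x).
Proof. by rewrite /hm /hv; case: eqP. Qed.
Definition mx n (A : {set 'I_n}) := \max_(x in A) val x.
Definition gA n d (A : {set 'I_n}) := hm d (mx A) @: A.

Lemma cliqP n d (e : rel 'I_n) (A : {set 'I_n}) :
  (forall x y : 'I_n, x != y -> e x y ->
     [|| val x == 0, val y == 0 | (val x).-1 %/ d == (val y).-1 %/ d]) ->
  [forall x in A, forall y in A, (x != y) ==> e x y] -> 0 < #|A| ->
  forall x, x \in A -> Pm d (mx A) (val x).
Proof.
move=> He /forall_inP Hc A0 x xA.
have [y yA ym] := eq_bigmax_cond (fun i : 'I_n => val i) A0.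
rewrite /Pm /mx ym.
have xle : val x <= val y by rewrite -ym; apply: leq_bigmax_cond.
case: (eqVneq (val x) (val y)) => [->|ne]; first by rewrite eqxx.
have xy : x != y by apply: contra ne => /eqP ->.
have := He x y xy; move: (Hc x xA) => /forall_inP /(_ y yA); rewrite xy /= => exy.
move/(_ exy) => /or3P[->|y0|->]; rewrite ?orbT //.
have -> : val x == 0 by move/eqP: y0 => y0; move: xle; rewrite -[val y]/(nat_of_ord y) y0; lia.
  by [].
by rewrite ltn_neqAle ne xle !orbT.
Qed.

Lemma hm_inj n d m (x y : 'I_n) : 0 < d -> Pm d m x -> Pm d m y -> hm d m x = hm d m y -> x = y.
Proof. move=> d0 Px Py /(congr1 val); rewrite !hmE => h; apply: val_inj; exact: F3 h. Qed.

Lemma gA_card n d (A : {set 'I_n}) : 0 < d -> (forall x, x \in A -> Pm d (mx A) (val x)) ->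
  #|gA d A| = #|A|.
Proof. move=> d0 HP; apply: card_in_imset => x y xA yA; apply: hm_inj => //; exact: HP. Qed.

Lemma mx_gA n d (A : {set 'I_n}) : 0 < d -> 0 < #|A| -> (forall x, x \in A -> Pm d (mx A) (val x)) ->
  mx (gA d A) = mx A.
Proof.
move=> d0 A0 HP; have [y yA ym] := eq_bigmax_cond (fun i : 'I_n => val i) A0.
apply/eqP; rewrite eqn_leq; apply/andP; split.
  apply/bigmax_leqP => z /imsetP[x xA ->]; rewrite hmE.
  case: (eqVneq (val x) (mx A)) => [e|ne]; first by rewrite /hv e eqxx.
  by have /andP[/ltnW] := F2 d0 (HP x xA) ne.
rewrite {1}/mx ym; apply: (@leq_trans (val (hm d (mx A) y))).
  by rewrite hmE /hv /mx ym eqxx.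
by apply: (@leq_bigmax_cond _ (fun i => i \in gA d A) (fun i : 'I_n => val i)); apply: imset_f.
Qed.

Lemma gA_inj n d (A B : {set 'I_n}) : 0 < d -> 0 < #|A| -> 0 < #|B| ->
  (forall x, x \in A -> Pm d (mx A) (val x)) ->
  (forall x, x \in B -> Pm d (mx B) (val x)) -> gA d A = gA d B -> A = B.
Proof.
move=> d0 A0 B0 HA HB E.
have Em : mx A = mx B by rewrite -(mx_gA d0 A0 HA) -(mx_gA d0 B0 HB) E.
rewrite -Em in HB; move: E; rewrite /gA -Em => E.
have key : forall C : {set 'I_n}, (forall x, x \in C -> Pm d (mx A) (val x)) ->
  forall x, Pm d (mx A) (val x) -> (x \in C) = (hm d (mx A) x \in hm d (mx A) @: C).
  move=> C HC x Px; apply/idP/idP; first exact: imset_f.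
  by case/imsetP=> z zC /(hm_inj d0 Px (HC z zC)) ->.
apply/setP => x; case Px: (Pm d (mx A) (val x)).
  by rewrite (key A HA x Px) (key B HB x Px) E.
apply/idP/idP => h; [by move: (HA x h); rewrite Px | by move: (HB x h); rewrite Px].
Qed.

Lemma gA_small n d (A : {set 'I_n}) : 0 < d -> (forall x, x \in A -> Pm d (mx A) (val x)) ->
  forall u v, u \in gA d A -> v \in gA d A -> u != v -> (val u < d) || (val v < d).
Proof.
move=> d0 HP u v /imsetP[x xA ->] /imsetP[y yA ->] ne.
rewrite !hmE.
case: (eqVneq (val x) (mx A)) => [ex|nx].
  case: (eqVneq (val y) (mx A)) => [ey|ny].
    have exy : x = y by apply: val_inj; rewrite ex ey.
    by move: ne; rewrite exy eqxx.
  by have /andP[_ ->] := F2 d0 (HP y yA) ny; rewrite orbT.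
by have /andP[_ ->] := F2 d0 (HP x xA) nx.
Qed.

Lemma dF l F : 2 <= l ->
  [\/ (F = [:: l; l] /\ ~~ odd l),
      F = [:: l.+1; l],
      (F = [:: l.+2; l] /\ odd l)
    | (F = [:: l; l; 2] /\ odd l)] -> deltaF F = l - 1.
Proof.
move=> l2 H; have := odd_double_half l; rewrite -muln2.
have hu := uphalf_half l.
case: H => [[-> o]|->|[-> o]|[-> o]]; rewrite /deltaF /= ?hu;
  try move: o; move: (odd l) (l./2) => [] h; lia.
Qed.

Theorem claim4p2 (l : nat) (F : seq nat) :
  2 <= l ->
  [\/ (F = [:: l; l] /\ ~~ odd l),
      F = [:: l.+1; l],
      (F = [:: l.+2; l] /\ odd l)
    | (F = [:: l; l; 2] /\ odd l)] ->
  forall t s : nat, 1 <= t -> 1 <= s <= (deltaF F).+1 ->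
    Ns s (K1tK l t) <= Ns s (GF F (t * (l - 1) + 1)).
Proof.
move=> l2 HF t s t1 /andP[s1 _].
have d0 : 0 < l - 1 by lia.
have eD := dF l2 HF.
set n := t * (l - 1) + 1.
have He : forall x y : 'I_n, x != y -> K1tK l t x y ->
     [|| val x == 0, val y == 0 | (val x).-1 %/ (l - 1) == (val y).-1 %/ (l - 1)].
  by move=> x y _; rewrite /K1tK => /andP[_ ->].
rewrite /Ns; set CH := [set A : {set 'I_n} | _].
have HCH : forall A, A \in CH -> 0 < #|A| /\ (forall x, x \in A -> Pm (l - 1) (mx A) (val x)).
  move=> A; rewrite inE => /andP[/eqP cA cl].
  have A0 : 0 < #|A| by rewrite cA.
  split => //; exact: (cliqP He cl A0).
rewrite -(@card_in_imset _ _ (gA (l - 1)) CH); last first.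
  move=> A B /HCH[A0 HA] /HCH[B0 HB]; exact: gA_inj.
apply: subset_leq_card; apply/subsetP => B /imsetP[A AH ->].
have [A0 HA] := HCH A AH.
move: AH; rewrite !inE => /andP[cA _].
rewrite gA_card //= cA /=.
apply/forall_inP => u uG; apply/forall_inP => v vG; apply/implyP => ne.
rewrite /GF ne /= eD.
by case/orP: (gA_small d0 HA uG vG ne) => ->; rewrite ?orbT.
Qed.
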